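(* For integers $n\ge 2$ and $k\ge 0$, let $$g^{(n-1)}_k(x)=\frac{\mathrm{Wr}\{\sin(\pi x),\sin(2\pi x),\dots,\sin((n-1)\pi x),\sin((n+k)\pi x)\}}{\mathrm{Wr}\{\sin(\pi x),\sin(2\pi x),\dots,\sin((n-1)\pi x)\}},\qquad x\in(0,1).$$ Then $$\int_0^1 \big(g^{(n-1)}_k(x)\big)^2\,dx=\frac{1}{2}\pi^{2n-2}\prod_{i=1}^{n-1}\big((n+k)^2-i^2\big)=\frac{\pi^{2n-2}\,\Gamma(2n+k)}{2\,(n+k)\,k!}.$$
   Context: For smooth functions $f_1,\dots,f_m$ of $x$, $\mathrm{Wr}\{f_1,\dots,f_m\}$ denotes the determinant of the $m\times m$ matrix with $(i,j)$ entry $f_j^{(i-1)}(x)$, derivatives taken with respect to $x$. *)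

(* Defs.v *)
From HB Require Import structures.
From mathcomp Require Import all_boot all_order all_algebra.
From mathcomp Require Import all_classical all_reals all_analysis.
Set Implicit Arguments. Unset Strict Implicit. Unset Printing Implicit Defensive.
Import Order.TTheory GRing.Theory Num.Theory.
Local Open Scope ring_scope.

Definition wronskian (R : realType) (m : nat) (f : 'I_m -> R -> R) (x : R) : R :=
  \det (\matrix_(i < m, j < m) derive1n i (f j) x).

Definition sin_family (R : realType) (n : nat) : 'I_n.-1 -> R -> R :=
  fun j x => sin ((j.+1)%:R * pi * x).

(* sin(pi x), ..., sin((n-1) pi x), sin((n+k) pi x) : n functions
   (for n >= 1, n.-1.+1 = n) *)
Definition sin_family_ext (R : realType) (n k : nat) : 'I_n.-1.+1 -> R -> R :=
  fun j x => if (j < n.-1)%N then sin ((j.+1)%:R * pi * x)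
             else sin ((n + k)%:R * pi * x).

Definition gfun (R : realType) (n k : nat) (x : R) : R :=
  wronskian (@sin_family_ext R n k) x / wronskian (@sin_family R n) x.

(* Main.v *)
Require Import Defs.
From HB Require Import structures.
From mathcomp Require Import all_boot all_order all_algebra.
From mathcomp Require Import all_classical all_reals all_analysis.
From mathcomp Require Import ring zify measurable_realfun.
Import Order.TTheory GRing.Theory Num.Theory.
Local Open Scope ring_scope.

Section Polys.
Variable R : realType.

Fixpoint TS (j : nat) : {poly R} * {poly R} :=
  match j with
  | 0 => (1, 0)
  | j'.+1 => let p := TS j' in ('X * p.1 - (1 - 'X^2) * p.2, p.1 + 'X * p.2)
  end.

Definition Tp j := (TS j).1.
Definition Sp j := (TS j).2.

Lemma TpS j : Tp j.+1 = 'X * Tp j - (1 - 'X^2) * Sp j. Proof. by []. Qed.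
Lemma SpS j : Sp j.+1 = Tp j + 'X * Sp j. Proof. by []. Qed.

Lemma trig_TS j (t : R) : cos (j%:R * t) = (Tp j).[cos t] /\
   sin (j%:R * t) = sin t * (Sp j).[cos t].
Proof.
elim: j => [|j [IH1 IH2]].
  rewrite /Tp /Sp /= !mul0r cos0 sin0 !hornerE; split => //; ring.
rewrite TpS SpS -addn1 natrD mulrDl mul1r cosD sinD IH1 IH2 !hornerE.
split; last by ring.
have := sin2cos2 t; rewrite expr2 => H. rewrite -H; ring.
Qed.

Lemma deriv_TS j : (Tp j)^`() = (j%:R : {poly R}) * Sp j /\
  (1 - 'X^2) * (Sp j)^`() = 'X * Sp j - (j%:R : {poly R}) * Tp j.
Proof.
elim: j => [|j [IH1 IH2]].
  by rewrite /Tp /Sp /= derivC deriv0; split; ring.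
rewrite TpS SpS !poly.derivE /= IH1.
split.
  rewrite ?poly.derivE /= IH2; ring.
rewrite ?poly.derivE /=.
transitivity ((1-'X^2)*((j%:R : {poly R}) * Sp j + Sp j) + 'X * ((1 - 'X^2) * (Sp j)^`())); first ring.
rewrite IH2; ring.
Qed.

Definition yp N m := (Sp N)^`(m).

Lemma ypS N m : yp N m.+1 = (yp N m)^`().
Proof. by rewrite /yp derivnS. Qed.

Lemma ode_y N m : (1 - 'X^2) * yp N m.+2 =
  (2 * m + 3)%:R * 'X * yp N m.+1 - (N%:R^+2 - (m.+1)%:R^+2) * yp N m.
Proof.
elim: m => [|m IH].
  rewrite /yp !derivnS derivn0.
  have [D1 D2] := deriv_TS N.
  have := congr1 (@deriv _) D2.
  rewrite ?poly.derivE /= D1 => E.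
  transitivity (((0 - 'X^1 *+ 2) * (Sp N)^`() + (1 - 'X^2) * (Sp N)^`()^`())
    + 'X^1 *+ 2 * (Sp N)^`()); first ring.
  rewrite E; ring.
have := congr1 (@deriv _) IH.
rewrite ?poly.derivE /= -!ypS => E.
transitivity (((0 - 'X^1 *+ 2) * yp N m.+2 + (1 - 'X^2) * yp N m.+3) + 'X^1 *+ 2 * yp N m.+2); first ring.
rewrite E; ring.
Qed.


Lemma coefTS j i : (Tp j.+1)`_i = (if i == 0%N then 0 else (Tp j)`_i.-1)
   - ((Sp j)`_i - (if (i < 2)%N then 0 else (Sp j)`_(i - 2)))
 /\ (Sp j.+1)`_i = (Tp j)`_i + (if i == 0%N then 0 else (Sp j)`_i.-1).
Proof.
by rewrite TpS SpS mulrBl mul1r coefB coefXM coefB coefXnM coefD coefXM.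
Qed.

Lemma coef_vanish j : (forall i, (j <= i)%N -> (Sp j)`_i = 0) /\
  (forall i, (j < i)%N -> (Tp j)`_i = 0).
Proof.
elim: j => [|j [IH1 IH2]].
  split => i hi; rewrite /Sp /Tp /= ?coef0 // coefC.
  by case: i hi.
split => i hi; have [C1 C2] := coefTS j i.
  rewrite C2 IH2 // add0r; case: i hi {C1 C2} => // i hi /=.
rewrite C1; case: i hi {C1 C2} => // i hi /=.
rewrite IH2 // IH1 ?(ltnW hi) //.
case: i hi => // i hi; rewrite /= subSS subn1 /= IH1 //.
  by rewrite !subrr.
by apply: leq_trans (leqnSn _) (ltnW hi).
Qed.

Lemma coef_lead j : (Sp j.+1)`_j = 2 ^+ j /\ (Tp j.+1)`_j.+1 = 2 ^+ j.
Proof.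
elim: j => [|j [IH1 IH2]].
  rewrite /Sp /Tp /= !mulr0 !subr0 ?addr0 ?mulr1 ?coefX ?coefC /= ?expr0. by [].
have [V1 V2] := coef_vanish j.+1.
have [C1 _] := coefTS j.+1 j.+2.
have [_ C2] := coefTS j.+1 j.+1.
rewrite C1 C2 /= subSS subn1 /= IH1 IH2 V1 // exprS; split; ring.
Qed.

End Polys.

Ltac hE := rewrite ?(hornerD, hornerN, hornerM, hornerC, hornerX, hornerXn, hornerMn, hornerZ).

Section Deriv.
Variable R : realType.

Lemma is_deriveM' {f g : R -> R} {x df dg : R} :
  is_derive x 1 f df -> is_derive x 1 g dg ->
  is_derive x 1 (fun y => f y * g y) (f x * dg + g x * df).
Proof. move=> H1 H2; exact: (is_deriveM H1 H2). Qed.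

Lemma is_deriveD' {f g : R -> R} {x df dg : R} :
  is_derive x 1 f df -> is_derive x 1 g dg ->
  is_derive x 1 (fun y => f y + g y) (df + dg).
Proof. move=> H1 H2; exact: (is_deriveD H1 H2). Qed.

Lemma is_derive_pimul (x : R) : is_derive x 1 (fun y : R => pi * y) pi.
Proof.
have H := is_deriveZ pi (is_derive_id x 1).
rewrite /= in H. rewrite -[X in is_derive _ _ _ X]mulr1. exact: H.
Qed.

Lemma is_derive_sinpi (x : R) :
  is_derive x 1 (fun y : R => sin (pi * y)) (cos (pi * x) * pi).
Proof.
exact: (@is_derive1_comp R sin (fun y => pi * y) x _ _ (is_derive_sin _) (is_derive_pimul x)).
Qed.

Lemma is_derive_cospi (x : R) :
  is_derive x 1 (fun y : R => cos (pi * y)) (- sin (pi * x) * pi).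
Proof.
exact: (@is_derive1_comp R cos (fun y => pi * y) x _ _ (is_derive_cos _) (is_derive_pimul x)).
Qed.

Lemma is_derive_hcos (q : {poly R}) (x : R) :
  is_derive x 1 (fun y : R => q.[cos (pi * y)])
    (q^`().[cos (pi * x)] * (- sin (pi * x) * pi)).
Proof.
exact: (@is_derive1_comp R (horner q) (fun y => cos (pi * y)) x _ _ (is_derive_poly _ _) (is_derive_cospi x)).
Qed.


Definition padd (p q : {poly R} * {poly R}) := (p.1 + q.1, p.2 + q.2).
Definition Dop (p : {poly R} * {poly R}) :=
  (- pi%:P * p.2^`(), pi%:P * ('X * p.1 - (1 - 'X^2) * p.1^`())).
Definition Mop (p : {poly R} * {poly R}) :=
  (- pi%:P * p.2, - pi%:P * (1 - 'X^2) * p.1).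

Fixpoint cf (i l : nat) : {poly R} * {poly R} :=
  match i with
  | 0 => if l == 0%N then (1, 0) else (0, 0)
  | i'.+1 => padd (Dop (cf i' l)) (if l is l'.+1 then Mop (cf i' l') else (0, 0))
  end.

Definition ev (p : {poly R} * {poly R}) (x : R) :=
  sin (pi * x) * p.1.[cos (pi * x)] + p.2.[cos (pi * x)].

Lemma ev_padd p q x : ev (padd p q) x = ev p x + ev q x.
Proof. rewrite /ev /padd/=; hE. ring. Qed.

Lemma ev0 x : ev (0, 0) x = 0.
Proof. rewrite /ev /=; hE; ring. Qed.

Lemma ev_Mop p x : ev (Mop p) x = - pi * sin (pi * x) * ev p x.
Proof.
rewrite /ev /Mop/=; hE.
have := sin2cos2 (pi * x); rewrite !expr2 => H.
transitivity (- pi * sin (pi * x) * p.2.[cos (pi * x)]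
   - pi * (1 - cos (pi * x) * cos (pi * x)) * p.1.[cos (pi * x)]); first ring.
rewrite -H; ring.
Qed.

Lemma is_derive_ev (p : {poly R} * {poly R}) (x : R) : is_derive x 1 (ev p) (ev (Dop p) x).
Proof.
have H := is_deriveD' (is_deriveM' (is_derive_sinpi x) (is_derive_hcos p.1 x)) (is_derive_hcos p.2 x).
apply: (is_derive_eq H).
rewrite /ev.
rewrite /Dop/=; hE.
have := sin2cos2 (pi * x); rewrite !expr2 => H2.
transitivity (sin (pi * x) * sin (pi * x) * (- pi * p.1^`().[cos (pi * x)])
  + sin (pi * x) * (- pi * p.2^`().[cos (pi * x)]) +
  pi * cos (pi * x) * p.1.[cos (pi * x)]); first ring.
rewrite H2; ring.
Qed.


Lemma is_derive_sum' n (h : 'I_n -> R -> R) (x : R) (dh : 'I_n -> R) :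
  (forall i, is_derive x 1 (h i) (dh i)) ->
  is_derive x 1 (fun y => \sum_(i < n) h i y) (\sum_(i < n) dh i).
Proof.
move=> H; have := is_derive_sum H; rewrite fct_sumE; exact.
Qed.

Lemma Dop0 : Dop (0, 0) = (0, 0).
Proof. by rewrite /Dop /= deriv0 !mulr0 subr0 mulr0. Qed.

Lemma Mop0 : Mop (0, 0) = (0, 0).
Proof. by rewrite /Mop /= !mulr0. Qed.

Lemma padd0 : padd (0, 0) (0, 0) = (0, 0).
Proof. by rewrite /padd /= addr0. Qed.

Lemma cf_high i l : (i < l)%N -> cf i l = (0, 0).
Proof.
elim: i l => [|i IH] l hl.
  by case: l hl.
case: l hl => // l hl /=.
by rewrite IH ?Dop0 ?IH ?Mop0 ?padd0 // ltnW.
Qed.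

Lemma ev_cf_diag i x : ev (cf i i) x = sin (pi * x) * (- pi * sin (pi * x)) ^+ i.
Proof.
elim: i => [|i IH]; first by rewrite /ev /= ; hE; ring.
rewrite /= cf_high // Dop0 ev_padd ev0 add0r ev_Mop IH exprS; ring.
Qed.

Lemma derive_struct (P : {poly R}) i K : (i < K)%N -> forall x,
  derive1n i (fun y => sin (pi * y) * P.[cos (pi * y)]) x =
  \sum_(l < K) ev (cf i l) x * (P^`(l)).[cos (pi * x)].
Proof.
elim: i K => [|i IH] K hK x.
  case: K hK => // K _; rewrite big_ord_recl big1 /=.
    rewrite /ev /=; hE; ring.
  by move=> l _; rewrite ev0 mul0r.
rewrite derive1nS.
have -> : derive1n i (fun y => sin (pi * y) * P.[cos (pi * y)]) =
   (fun y => \sum_(l < K) ev (cf i l) y * (P^`(l)).[cos (pi * y)]).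
  by apply/funext => y; rewrite (IH K) // ltnW.
rewrite derive1E.
have Hd := @is_derive_sum' K (fun l y => ev (cf i l) y * (P^`(l)).[cos (pi * y)]) x _ (fun l => is_deriveM' (is_derive_ev (cf i l) x) (is_derive_hcos (P^`(l)) x)).
rewrite derive_val big_split /=.
have -> : \sum_(l < K) ev (cf i.+1 l) x * P^`(l).[cos (pi * x)] =
   \sum_(l < K) P^`(l).[cos (pi * x)] * ev (Dop (cf i l)) x +
   \sum_(l < K) ev (if (l : nat) is l'.+1 then Mop (cf i l') else (0, 0)) x * P^`(l).[cos (pi * x)].
  rewrite -big_split /=; apply: eq_bigr => l _.
  by rewrite ev_padd; ring.
rewrite addrC; congr (_ + _).
case: K hK {IH Hd} => // K hK.
rewrite [RHS]big_ord_recl ev0 mul0r add0r [LHS]big_ord_recr cf_high ?ev0 ?mul0r ?addr0 //.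
rewrite Monoid.mulm1. apply: eq_bigr => l _; rewrite lift0 ev_Mop -derivnS; ring.
Qed.

End Deriv.
Arguments cf {R}.
Arguments ev {R}.
Arguments Dop {R}.
Arguments Mop {R}.
Arguments padd {R}.
Arguments derive_struct {R}.
Arguments cf_high {R}.
Arguments ev0 {R}.
Arguments ev_cf_diag {R}.
Arguments is_deriveM' {R f g x df dg}.
Arguments is_deriveD' {R f g x df dg}.
Arguments is_derive_sinpi {R}.
Arguments is_derive_cospi {R}.
Arguments is_derive_hcos {R}.
Arguments is_derive_pimul {R}.

Section Mat.
Variable R : realType.

Lemma det_struct M (Pf : 'I_M -> {poly R}) (x : R) :
  (forall (j l : 'I_M), (j < l)%N -> (Pf j)^`(l) = 0) ->
  \det (\matrix_(i < M, j < M)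
      derive1n i (fun y => sin (pi * y) * (Pf j).[cos (pi * y)]) x) =
  (\prod_(i < M) ev (cf i i) x) * \prod_(j < M) ((Pf j)^`(j)).[cos (pi * x)].
Proof.
move=> Htri.
pose A := \matrix_(i < M, l < M) ev (cf i l) x.
pose Q := \matrix_(l < M, j < M) ((Pf j)^`(l)).[cos (pi * x)].
have -> : \matrix_(i < M, j < M)
      derive1n i (fun y => sin (pi * y) * (Pf j).[cos (pi * y)]) x = A *m Q.
  apply/matrixP => i j; rewrite !mxE (derive_struct _ _ _ (ltn_ord i)).
  by apply: eq_bigr => l _; rewrite !mxE.
rewrite det_mulmx det_trig; last first.
  apply/is_trig_mxP => i l hil; rewrite mxE cf_high // ev0 //.
rewrite -det_tr det_trig; last first.
  apply/is_trig_mxP => i l hil; rewrite !mxE Htri //.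
  by rewrite hornerE.
by congr (_ * _); apply: eq_bigr => i _; rewrite !mxE.
Qed.

End Mat.

Section Spec.
Variable R : realType.

Lemma sinS_eq j (y : R) : sin (j%:R * pi * y) = sin (pi * y) * (Sp R j).[cos (pi * y)].
Proof. by rewrite -mulrA; have [_ ->] := trig_TS R j (pi * y). Qed.

Lemma Sp_high j l : (j < l)%N -> (Sp R j.+1)^`(l) = 0.
Proof.
move=> hl; apply: derivn_poly0; apply/leq_sizeP => i hi.
by have [V _] := coef_vanish R j.+1; apply: V; apply: leq_trans hl hi.
Qed.

Lemma Sp_diag j : (Sp R j.+1)^`(j) = (2 ^+ j * j`!%:R)%:P.
Proof.
apply/polyP => i; rewrite coef_derivn coefC.
case: i => [|i] /=.
  by rewrite addn0 ffactnn; have [-> _] := coef_lead R j; rewrite mulr_natr.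
have [V _] := coef_vanish R j.+1; rewrite V ?mul0rn //.
by rewrite addnS ltnS leq_addr.
Qed.


Lemma wr_ext m k (x : R) :
  wronskian (@sin_family_ext R m.+1 k) x =
  (\prod_(i < m.+1) ev (cf i i) x) *
  \prod_(j < m.+1) ((if (j < m)%N then Sp R j.+1 else Sp R (m.+1 + k))^`(j)).[cos (pi * x)].
Proof.
rewrite /wronskian -det_struct.
  congr (\det _); apply/matrixP => i j; rewrite !mxE; congr (derive1n _ _ _).
  apply/funext => y; rewrite /sin_family_ext /=.
  by case: ifP => _; rewrite sinS_eq.
move=> j l hjl; case: ifP => hj; first exact: Sp_high.
by have := ltn_ord l; rewrite ltnS leqNgt (leq_trans _ hjl) // ltnS leqNgt hj.
Qed.

Lemma wr_fam m (x : R) :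
  wronskian (@sin_family R m.+1) x =
  (\prod_(i < m) ev (cf i i) x) *
  \prod_(j < m) ((Sp R j.+1)^`(j)).[cos (pi * x)].
Proof.
rewrite /wronskian -det_struct.
  congr (\det _); apply/matrixP => i j; rewrite !mxE; congr (derive1n _ _ _).
  by apply/funext => y; rewrite /sin_family /= sinS_eq.
by move=> j l hjl; exact: Sp_high.
Qed.

Lemma gfunE m k (x : R) : 0 < x < 1 ->
  gfun m.+1 k x = sin (pi * x) * (- pi * sin (pi * x)) ^+ m *
     (yp R (m.+1 + k) m).[cos (pi * x)].
Proof.
move=> /andP[x0 x1].
have s0 : 0 < sin (pi * x).
  by apply: sin_gt0_pi; rewrite mulr_gt0 ?pi_gt0 //= gtr_pMr ?pi_gt0.
rewrite /gfun wr_ext wr_fam !big_ord_recr /= ltnn.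
set D1 := \prod_(i < m) _.
set D2 := \prod_(i < m) _.
have E : D2 = \prod_(j < m) (Sp R j.+1)^`(j).[cos (pi * x)].
  by apply: eq_bigr => i _; rewrite ltn_ord.
rewrite -E.
have D0 : D1 * D2 != 0.
  rewrite mulf_neq0 //.
    apply/prodf_neq0 => i _; rewrite ev_cf_diag; apply: mulf_neq0.
      by rewrite gt_eqF.
    by apply: expf_neq0; rewrite mulf_neq0 ?oppr_eq0 ?gt_eqF ?pi_gt0.
  rewrite E; apply/prodf_neq0 => i _; rewrite Sp_diag hornerC; apply: mulf_neq0.
    by apply: expf_neq0; rewrite pnatr_eq0.
  by rewrite pnatr_eq0 -lt0n fact_gt0.
rewrite ev_cf_diag /yp.
set e := (_ * _ ^+ m); set q := _.[_].
have -> : D1 * e * (D2 * q) = (e * q) * (D1 * D2) by ring.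
by rewrite mulfK.
Qed.

End Spec.


Section Integ.
Variable R : realType.

Lemma is_deriveX' {f : R -> R} {x df : R} n :
  is_derive x 1 f df ->
  is_derive x 1 (fun y => f y ^+ n) (n%:R * f x ^+ n.-1 * df).
Proof.
move=> H; elim: n => [|n IH].
  apply: is_derive_eq; first exact: (is_derive_cst (1 : R) x 1).
  by rewrite mul0r mul0r.
have -> : (fun y => f y ^+ n.+1) = (fun y => f y * f y ^+ n).
  by apply/funext => y; rewrite exprS.
apply: (is_derive_eq (is_deriveM' H IH)).
case: n {IH} => [|n] /=; first by rewrite !expr0; ring.
rewrite !exprS; ring.
Qed.

Definition hh N m (x : R) :=
  sin (pi * x) ^+ (2 * m).+2 * ((yp R N m).[cos (pi * x)]) ^+ 2.
Definition Psi N m (x : R) :=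
  sin (pi * x) ^+ (2 * m).+3 * (yp R N m.+1).[cos (pi * x)] *
  (yp R N m).[cos (pi * x)].

Lemma is_derive_Psi N m (x : R) : is_derive x 1 (Psi N m)
  (pi * ((N%:R ^+ 2 - (m.+1)%:R ^+ 2) * hh N m x - hh N m.+1 x)).
Proof.
have H := is_deriveM' (is_deriveM' (is_deriveX' (2 * m).+3 (is_derive_sinpi x))
   (is_derive_hcos (yp R N m.+1) x)) (is_derive_hcos (yp R N m) x).
apply: (is_derive_eq H).
rewrite /hh -!ypS /=.
have O := congr1 (fun p => p.[cos (pi * x)]) (ode_y R N m).
move: O; rewrite /=; hE; rewrite -!ypS => O.
have := sin2cos2 (pi * x); rewrite !expr2 => H2.
have -> : (2 * m.+1).+2 = ((2 * m).+2).+2 by rewrite mulnS.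
rewrite !exprS.
set S := sin (pi * x) ^+ (2 * m).
set s := sin (pi * x). set c := cos (pi * x).
set y0 := (yp R N m).[c]. set y1 := (yp R N m.+1).[c]. set y2 := (yp R N m.+2).[c].
apply/eqP; rewrite -subr_eq0; apply/eqP.
transitivity (- pi * (s * s * S * y0) * ((s * s) * y2 -
   ((2 * m + 3)%:R * c * y1 - (N%:R * N%:R - m.+1%:R * m.+1%:R) * y0))); first ring.
by rewrite H2 O subrr mulr0.
Qed.


Lemma is_derive_mul (a x : R) : is_derive x 1 (fun y : R => a * y) a.
Proof.
have H := is_deriveZ a (is_derive_id x 1).
rewrite /= in H. rewrite -[X in is_derive _ _ _ X]mulr1. exact: H.
Qed.

Lemma is_derive_sinmul (a x : R) :
  is_derive x 1 (fun y : R => sin (a * y)) (cos (a * x) * a).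
Proof.
exact: (@is_derive1_comp R sin (fun y => a * y) x _ _ (is_derive_sin _) (is_derive_mul a x)).
Qed.

Lemma Psi0 N m : Psi N m 0 = 0.
Proof. by rewrite /Psi mulr0 sin0 expr0n /= !mul0r. Qed.

Lemma Psi1 N m : Psi N m 1 = 0.
Proof. by rewrite /Psi mulr1 sinpi expr0n /= !mul0r. Qed.

Lemma antider N m : (0 < N)%N -> exists H : R -> R,
  (forall x : R, is_derive x 1 H (hh N m x)) /\
  H 1 - H 0 = 2^-1 * \prod_(i < m) (N%:R ^+ 2 - (i.+1)%:R ^+ 2).
Proof.
move=> N0.
have pi0 : pi != 0 :> R by rewrite gt_eqF ?pi_gt0.
elim: m => [|m [H [HD HV]]].
  pose a : R := (2 * N)%:R * pi.
  have a0 : a != 0 by rewrite mulf_neq0 // pnatr_eq0 muln_eq0 /= -lt0n.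
  exists (fun y => 2^-1 * y + (- (2 * a)^-1) * sin (a * y)); split.
    move=> x.
    apply: (is_derive_eq (is_deriveD' (is_derive_mul _ x)
       (is_deriveM' (is_derive_cst (- (2 * a)^-1) x 1) (is_derive_sinmul a x)))).
    rewrite /hh /yp derivn0 /=.
    have E1 : a * x = N%:R * pi * x + N%:R * pi * x by rewrite /a natrM; ring.
    have := cos2sin2 (N%:R * pi * x); rewrite !expr2 => C2.
    rewrite E1 cosD C2 sinS_eq mulr0 addr0.
    by field.
  rewrite big_ord0 !mulr0 sin0 /a sinS_eq mulr1 sinpi; ring.
pose lam : R := N%:R ^+ 2 - (m.+1)%:R ^+ 2.
exists (fun y => lam * H y + (- pi^-1) * Psi N m y); split.
  move=> x.
  apply: (is_derive_eq (is_deriveD' (is_deriveM' (is_derive_cst lam x 1) (HD x))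
     (is_deriveM' (is_derive_cst (- pi^-1) x 1) (is_derive_Psi N m x)))).
  rewrite /lam /= !mulr0 !addr0 mulrA mulNr mulVf //; ring.
rewrite /= Psi0 Psi1 big_ord_recr /= -/lam.
have -> : lam * H 1 + - pi^-1 * 0 - (lam * H 0 + - pi^-1 * 0) = lam * (H 1 - H 0) by ring.
rewrite HV; ring.
Qed.

End Integ.
Arguments is_deriveX' {R f x df}.

Import numFieldNormedType.Exports.

Section Final.
Variable R : realType.
Local Open Scope classical_set_scope.

Lemma gfun2 m k (x : R) : 0 < x < 1 ->
  (gfun m.+1 k x) ^+ 2 = pi ^+ (2 * m) * hh R (m.+1 + k) m x.
Proof.
move=> hx; rewrite gfunE // /hh.
set s := sin (pi * x); set y := _.[_].
rewrite !exprMn !(exprAC _ m 2) sqrrN.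
rewrite -[(2 * m).+2]addn2 exprD !exprM; ring.
Qed.

Lemma cont_of_der (f : R -> R) : (forall x : R, derivable f x 1) -> continuous f.
Proof.
move=> H x; apply: differentiable_continuous; exact/derivable1_diffP.
Qed.

Lemma cont_hh N m (c : R) : continuous (fun x : R => c * hh R N m x).
Proof.
apply: cont_of_der => x; rewrite /hh.
have D := ((is_deriveM' (is_derive_cst c x 1)
  (is_deriveM' (is_deriveX' (2 * m).+2 (is_derive_sinpi x)) (is_deriveX' 2 (is_derive_hcos (yp R N m) x))))).
by case: D.
Qed.


Lemma integral_g m k :
  (\int[(@lebesgue_measure R)]_(x in `]0%R, 1%R[) ((gfun m.+1 k x) ^+ 2)%:E =
   (pi ^+ (2 * m) * (2^-1 * \prod_(i < m) ((m.+1 + k)%:R ^+ 2 - (i.+1)%:R ^+ 2)))%:E)%E.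
Proof.
have [H [HD HV]] := antider R (m.+1 + k) m isT.
set c := pi ^+ (2 * m) : R.
pose f := fun x : R => c * hh R (m.+1 + k) m x.
transitivity (\int[(@lebesgue_measure R)]_(x in `]0%R, 1%R[) (f x)%:E)%E.
  apply: eq_integral => x; rewrite inE /= in_itv /= => hx.
  by rewrite gfun2.
have cf := cont_hh (m.+1 + k) m c.
rewrite -(@integral_itv_bndoo R 0 1 _ true false); last first.
  apply/measurable_EFinP; apply: measurable_funTS.
  exact: continuous_measurable_fun.
have dF : forall x : R, is_derive x 1 (fun y => c * H y) (f x).
  by move=> x; apply: (is_derive_eq (is_deriveM' (is_derive_cst c x 1) (HD x))); rewrite /f mulr0 addr0.
have cF : continuous (fun y => c * H y).
  by apply: cont_of_der => x; case: (dF x).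
rewrite (@continuous_FTC2 R f (fun y => c * H y)) //.
- by rewrite -EFinB -mulrBr HV.
- exact: continuous_subspaceT.
- split.
  + by move=> x _; case: (dF x).
  + exact: cvg_at_right_filter (cF 0).
  + exact: cvg_at_left_filter (cF 1).
- by move=> x _; rewrite derive1E; case: (dF x).
Qed.


Lemma prod_fact m : forall d, 
  (\prod_(i < m) ((m.+1 + d)%:R ^+ 2 - (i.+1)%:R ^+ 2)) * (m.+1 + d)%:R * d`!%:R
  = ((m.+1 + d) + m)`!%:R :> R.
Proof.
elim: m => [|m IH] d.
  by rewrite big_ord0 mul1r addn0 add1n factS natrM.
have := IH d.+1; rewrite big_ord_recr /= => E.
have -> : (m.+2 + d)%N = (m.+1 + d.+1)%N by rewrite addnS addSn.
have -> : (m.+1 + d.+1 + m.+1)%N = (m.+1 + d.+1 + m).+1 by rewrite addnS.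
rewrite factS natrM -E factS natrM.
rewrite !natrD; ring.
Qed.

End Final.

Local Open Scope classical_set_scope.

Theorem mainTheorem7 (R : realType) (n k : nat) (hn : (2 <= n)%N) :
  (\int[(@lebesgue_measure R)]_(x in `]0%R, 1%R[) ((@gfun R n k x) ^+ 2)%:E
     = (2^-1 * pi ^+ (2 * n - 2) *
        \prod_(1 <= i < n) ((n + k)%:R ^+ 2 - i%:R ^+ 2))%:E)%E
  /\ 2^-1 * pi ^+ (2 * n - 2) *
        \prod_(1 <= i < n) ((n + k)%:R ^+ 2 - i%:R ^+ 2)
     = pi ^+ (2 * n - 2) * (2 * n + k - 1)`!%:R
       / (2 * (n + k)%:R * k`!%:R) :> R.
Proof.
case: n hn => [|m] // hm.
have e1 : (2 * m.+1 - 2)%N = (2 * m)%N by rewrite mulnS addKn.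
have eP : \prod_(1 <= i < m.+1) ((m.+1 + k)%:R ^+ 2 - i%:R ^+ 2) =
   \prod_(i < m) ((m.+1 + k)%:R ^+ 2 - (i.+1)%:R ^+ 2) :> R.
  by rewrite big_add1 /= big_mkord.
rewrite e1 eP; split.
  by rewrite integral_g; congr (_%:E); ring.
have e2 : (2 * m.+1 + k - 1)%N = (m.+1 + k + m)%N.
  by lia.
rewrite e2 -prod_fact.
have N0 : (m.+1 + k)%:R != 0 :> R by rewrite pnatr_eq0 addSn.
have K0 : k`!%:R != 0 :> R by rewrite pnatr_eq0 -lt0n fact_gt0.
field; rewrite K0 /=.
have <- : ((m.+1 + k)%:R : R) = 1 + m%:R + k%:R by rewrite natrD -add1n natrD.
exact: N0.
Qed.
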